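(* Let $\alpha>0$, $\varepsilon>0$, and let $S_1,C$ be produced by Phase A and $S_2$ by Phase B (before removing $S_2\cap D$). Let $O\in\mathcal M$ be an optimal feasible solution over the data $(V\setminus C)\cup(C\setminus D)$, i.e. $O\in\arg\max\{f(S): S\subseteq (V\setminus C)\cup(C\setminus D),\ S\in\mathcal M\}$. Then \[ f(O)\le \beta\, w(S_2),\qquad \beta=(p(\alpha+1)-1)(\alpha+1)/\alpha+1+1/\alpha. \]
   Context: Setting. $V$ is a finite ground set of $n=|V|$ items arriving one at a time in a fixed stream order. $f:2^V\to\mathbb R_{\ge 0}$ is non-decreasing and submodular with $f(\emptyset)=0$; write $f(v\mid X)=f(X\cup\{v\})-f(X)$. $\mathcal M=\mathcal M_1\cap\dots\cap\mathcal M_p$ is the intersection of $p$ matroids $\mathcal M_1,\dots,\mathcal M_p$ on $V$ (a ''$p$-matroid''); a set is feasible if it lies in $\mathcal M$; the rank is $r=\max_{S\in\mathcal M}|S|$. $d\ge 0$ is an integer and $D\subseteq V$ is a deletion set with $|D|\le d$, fixed in advance and independent of the algorithm's random bits (static adversary). Weights. Items receive a weight $w(v)\ge 0$ when processed, as specified below; for a set $S$, $w(S)=\sum_{u\in S}w(u)$ (with $w(\emptyset)=0$). Exchange$(v,I)$: for each $j\in[p]$ with $I\cup\{v\}\notin\mathcal M_j$, let $u_j\in\arg\min\{w(u): u\in I,\ (I\cup\{v\})\setminus\{u\}\in\mathcal M_j\}$; return the set $\{u_j\}$ of these items (empty if $I\cup\{v\}\in\mathcal M$). Phase A (streaming, parameters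 $\varepsilon,\alpha>0$): initialize $I=\emptyset$, $C=\emptyset$. For each arriving item $v'$ of $V$ in stream order: (1) $C\gets C\cup\{v'\}$; (2) $C\gets\{v\in C: f(v\mid I)\ge (1+\alpha)\,w(\mathrm{Exchange}(v,I))\}$; (3) if $|C|\ge d/\varepsilon$, sample one item $v\in C$ at random with probability proportional to $1/f(v\mid I)$, set $w(v)=f(v\mid I)$, and set $I\gets (I\cup\{v\})\setminus \mathrm{Exchange}(v,I)$. At the end output $S_1:=I$ and the buffer $C$. The coreset is $R=S_1\cup C$. Phase B (after deletions, parameter $\alpha$): start with $I=S_1$. For each $v\in C\setminus D$: set $w(v)=f(v\mid I)$, $S=\mathrm{Exchange}(v,I)$, and if $w(v)\ge(1+\alpha)w(S)$ set $I\gets(I\cup\{v\})\setminus S$. Let $S_2$ be the final $I$; output $\mathrm{ALG}=S_2\setminus D$. *)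

(* Defs.v *)
From HB Require Import structures.
From mathcomp Require Import all_boot all_order all_algebra.
Set Implicit Arguments. Unset Strict Implicit. Unset Printing Implicit Defensive.
Import Order.TTheory GRing.Theory Num.Theory.
Local Open Scope ring_scope.

Section Defs.
Variables (R : realFieldType) (V : finType).

Definition mg (f : {set V} -> R) (v : V) (X : {set V}) : R := f (v |: X) - f X.

Definition monotone (f : {set V} -> R) : Prop :=
  forall A B : {set V}, A \subset B -> f A <= f B.

Definition submodular (f : {set V} -> R) : Prop :=
  forall (A B : {set V}) (x : V), A \subset B -> x \notin B -> mg f x B <= mg f x A.

Definition is_matroid (M : pred {set V}) : Prop :=
  [/\ M set0,
      (forall A B : {set V}, A \subset B -> M B -> M A) &
      (forall A B : {set V}, M A -> M B -> (#|A| < #|B|)%N ->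
          exists2 x, x \in B :\: A & M (x |: A))].

Definition feasible (p : nat) (Ms : 'I_p -> pred {set V}) (S : {set V}) : Prop :=
  forall j, Ms j S.

Definition wsum (w : V -> R) (S : {set V}) : R := \sum_(u in S) w u.

Definition upd (w : V -> R) (v : V) (a : R) : V -> R :=
  fun u => if u == v then a else w u.

(* Ex is a valid implementation of Exchange(v, X) (w.r.t. current weights w),
   for every feasible X, with an arbitrary tie-breaking rule for the argmin *)
Definition exch_spec (p : nat) (Ms : 'I_p -> pred {set V})
    (Ex : {set V} -> V -> (V -> R) -> {set V}) : Prop :=
  forall (X : {set V}) (v : V) (w : V -> R), feasible Ms X ->
  exists u : 'I_p -> V,
    (forall j, ~~ Ms j (v |: X) ->
       [/\ u j \in X, Ms j ((v |: X) :\ u j) &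
           forall u', u' \in X -> Ms j ((v |: X) :\ u') -> w (u j) <= w u'])
    /\ Ex X v w = u @: [set j | ~~ Ms j (v |: X)].

Definition stepA (f : {set V} -> R) (Ex : {set V} -> V -> (V -> R) -> {set V})
    (d : nat) (eps alpha : R) (x : V)
    (st st' : {set V} * {set V} * (V -> R)) : Prop :=
  let: (X, C, w) := st in
  let C2 := [set v in x |: C | (1 + alpha) * wsum w (Ex X v w) <= mg f v X] in
  if #|C2|%:R < d%:R / eps then st' = (X, C2, w)
  else exists2 v, v \in C2 &
     st' = ((v |: X) :\: Ex X v w, C2 :\ v, upd w v (mg f v X)).

Fixpoint runA f Ex d eps alpha (s : seq V)
    (st st' : {set V} * {set V} * (V -> R)) : Prop :=
  match s with
  | [::] => st' = st
  | x :: s' => exists2 mid, stepA f Ex d eps alpha x st mid &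
                            runA f Ex d eps alpha s' mid st'
  end.

Definition stepB (f : {set V} -> R) (Ex : {set V} -> V -> (V -> R) -> {set V})
    (alpha : R) (v : V) (st st' : {set V} * (V -> R)) : Prop :=
  let: (X, w) := st in
  let w' := upd w v (mg f v X) in
  let S := Ex X v w' in
  if (1 + alpha) * wsum w' S <= w' v then st' = ((v |: X) :\: S, w')
  else st' = (X, w').

Fixpoint runB f Ex alpha (s : seq V) (st st' : {set V} * (V -> R)) : Prop :=
  match s with
  | [::] => st' = st
  | x :: s' => exists2 mid, stepB f Ex alpha x st mid & runB f Ex alpha s' mid st'
  end.

End Defs.

(* Main.v *)
Require Import Defs.
From HB Require Import structures.
From mathcomp Require Import all_boot all_order all_algebra.
From mathcomp Require Import ring lra zify.
Import Order.TTheory GRing.Theory Num.Theory.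
Set Implicit Arguments. Unset Strict Implicit. Unset Printing Implicit Defensive.

Module Helpers.
Local Open Scope ring_scope.
Lemma sum_ge0_set (R : realFieldType) (T : finType) (A : {set T}) (a : T -> R) :
  (forall x, x \in A -> 0 <= a x) -> 0 <= \sum_(x in A) a x.
Proof. by move=> h; apply: sumr_ge0 => x /h. Qed.

Lemma sum_setU_le (R : realFieldType) (T : finType) (A B : {set T}) (a : T -> R) :
  (forall x, x \in B -> 0 <= a x) ->
  \sum_(x in A :|: B) a x <= \sum_(x in A) a x + \sum_(x in B) a x.
Proof.
move=> hB.
rewrite (@big_setID _ _ _ _ (A :|: B) A) /=.
have -> : (A :|: B) :&: A = A by apply/setP => x; rewrite !inE; case: (x \in A); case: (x \in B).
apply: lerD => //.
rewrite (@big_setID _ _ _ _ B A) /=.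
have -> : (A :|: B) :\: A = B :\: A by apply/setP => x; rewrite !inE; case: (x \in A); case: (x \in B).
rewrite lerDr; apply: sum_ge0_set => x; rewrite !inE => /andP[xB _]; exact: hB.
Qed.

Lemma sum_imset_le (R : realFieldType) (I T : finType) (u : I -> T) (P : {set I}) (a : T -> R) :
  (forall i, i \in P -> 0 <= a (u i)) ->
  \sum_(x in u @: P) a x <= \sum_(i in P) a (u i).
Proof.
move=> h.
have : forall l : seq I, (forall i, i \in l -> 0 <= a (u i)) ->
   \sum_(x in [set u i | i in l]) a x <= \sum_(i <- l) a (u i).
  elim=> [|i l IH] hl.
    rewrite big_nil.
    have -> : [set u i0 | i0 in [::]] = set0 :> {set T}.
      by apply/setP => x; rewrite [in RHS]inE; apply/negbTE/imsetP => -[y].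
    by rewrite big_set0.
  have -> : [set u i0 | i0 in i :: l] = u i |: [set u i0 | i0 in l].
    apply/setP => x; rewrite !inE; apply/imsetP/idP.
      move=> [y]; rewrite inE => /orP[/eqP -> -> |yl ->]; first by rewrite eqxx.
      by apply/orP; right; apply/imsetP; exists y.
    move=> /orP[/eqP -> | /imsetP[y yl ->]]; first by exists i; rewrite ?inE ?eqxx.
    by exists y; rewrite // inE yl orbT.
  rewrite big_cons.
  have hl' : forall j, j \in l -> 0 <= a (u j) by move=> j jl; apply: hl; rewrite inE jl orbT.
  case: (boolP (u i \in [set u i0 | i0 in l])) => hin.
    rewrite (setUidPr _); last by rewrite sub1set.
    have := IH hl'; have := hl i (mem_head _ _); lra.
  rewrite big_setU1 //=; apply: lerD => //; exact: IH.
move=> /(_ (enum P)).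
rewrite big_enum /=.
have -> : [set u i | i in enum P] = u @: P.
  by apply/setP => x; apply/imsetP/imsetP => -[y hy ->]; exists y; rewrite ?mem_enum in hy *.
apply=> i; rewrite mem_enum; exact: h.
Qed.

Lemma count_sum (R : realFieldType) (T : finType) (n : nat) (P Q : {set T}) (a b : T -> R) :
  #|P| = n ->
  (forall x, x \in P -> 0 <= a x) -> (forall y, y \in Q -> 0 <= b y) ->
  (forall t : R, 0 < t -> (#|[set x in P | (t <= a x)%R]| <= #|[set y in Q | (t <= b y)%R]|)%N) ->
  \sum_(x in P) a x <= \sum_(y in Q) b y.
Proof.
elim: n P Q => [|n IH] P Q hn ha hb hc.
  move/eqP: hn; rewrite cards_eq0 => /eqP ->; rewrite big_set0; exact: sum_ge0_set.
have [i0 i0P] : exists i0, i0 \in P.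
  by apply/set0Pn; rewrite -card_gt0 hn.
have [m mP mmax] : exists2 m, m \in P & forall j, j \in P -> a j <= a m.
  by case: (arg_maxP a i0P) => m mP mmax; exists m.
have [am0|am0] := lerP (a m) 0.
  apply: (le_trans (y := \sum_(x in P) (0:R))).
    by apply: ler_sum => x xP; apply: le_trans (mmax x xP) am0.
  rewrite big1 //; exact: sum_ge0_set.
have := hc _ am0.
have mPt : m \in [set x in P | a m <= a x] by rewrite inE mP lexx.
rewrite (cardsD1 m) mPt add1n => hcnt.
have [j0 j0Q] : exists j0, j0 \in [set y in Q | a m <= b y].
  by apply/set0Pn; rewrite -card_gt0; apply: leq_trans hcnt.
move: j0Q; rewrite inE => /andP[j0Q hj0].
rewrite (big_setD1 _ mP) (big_setD1 _ j0Q) /=.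
apply: lerD => //.
apply: IH.
- by move: hn; rewrite (cardsD1 m) mP add1n => -[].
- by move=> x; rewrite inE => /andP[_]; exact: ha.
- by move=> y; rewrite inE => /andP[_]; exact: hb.
move=> t t0.
have [tle|tgt] := lerP t (a m).
  have := hc t t0.
  rewrite (cardsD1 m [set x in P | t <= a x]) (cardsD1 j0 [set y in Q | t <= b y]).
  rewrite !inE mP j0Q tle (le_trans tle hj0) /= !add1n ltnS.
  have e1 : [set x in P :\ m | (t <= a x)%R] = [set x in P | (t <= a x)%R] :\ m.
    by apply/setP => x; rewrite !inE andbA.
  have e2 : [set x in Q :\ j0 | (t <= b x)%R] = [set x in Q | (t <= b x)%R] :\ j0.
    by apply/setP => x; rewrite !inE andbA.
  by rewrite e1 e2.
have -> : [set x in P :\ m | (t <= a x)%R] = set0.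
  apply/setP => x; rewrite !inE; apply/negbTE; rewrite negb_and.
  case: (boolP (x \in P)); rewrite ?orbT ?andbF //= andbT => xP.
  by rewrite -ltNge (le_lt_trans (mmax x xP) tgt) orbT.
by rewrite cards0.
Qed.

End Helpers.
Import Helpers.

Module Helpers2.
Definition rk (V : finType) (M : pred {set V}) (T : {set V}) : nat :=
  \max_(Y in [pred Y : {set V} | (Y \subset T) && M Y]) #|Y|.

Lemma rk_ub (V : finType) (M : pred {set V}) (T Y : {set V}) : Y \subset T -> M Y -> #|Y| <= rk M T.
Proof. by move=> h1 h2; rewrite /rk; apply: (@leq_bigmax_cond _ _ (fun Y : {set V} => #|Y|) Y); rewrite inE h1 h2. Qed.

Lemma rk_ex (V : finType) (M : pred {set V}) (T : {set V}) : M set0 ->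
  exists Y : {set V}, [/\ Y \subset T, M Y & #|Y| = rk M T].
Proof.
move=> h0.
have [|Y] := @eq_bigmax_cond _ [pred Y : {set V} | (Y \subset T) && M Y] (fun Y => #|Y|).
  by apply/card_gt0P; exists set0; rewrite inE sub0set h0.
by rewrite inE => /andP[h1 h2] e; exists Y; split.
Qed.

Lemma rk_card (V : finType) (M : pred {set V}) (T : {set V}) : rk M T <= #|T|.
Proof. apply/bigmax_leqP => Y; rewrite inE => /andP[h _]; exact: subset_leq_card. Qed.

Lemma rk_mono (V : finType) (M : pred {set V}) (T T' : {set V}) : T \subset T' -> rk M T <= rk M T'.
Proof.
move=> h; apply/bigmax_leqP => Y; rewrite inE => /andP[h1 h2].
apply: rk_ub => //; exact: subset_trans h1 h.
Qed.

Lemma mat_sub (V : finType) (M : pred {set V}) (A B : {set V}) : is_matroid M -> A \subset B -> M B -> M A.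
Proof. by case=> _ h _; apply: h. Qed.

Lemma mat_aug (V : finType) (M : pred {set V}) (Y B : {set V}) : is_matroid M -> M Y -> M B ->
  exists Y' : {set V}, [/\ Y \subset Y', Y' \subset Y :|: B, M Y' & #|B| <= #|Y'|].
Proof.
move=> hM; move: {2}(#|B| - #|Y|) (erefl (#|B| - #|Y|)) => k.
elim: k Y => [|k IH] Y hk hY hB.
  by exists Y; split => //; [exact: subsetUl | lia].
have [x xBY hx] : exists2 x, x \in B :\: Y & M (x |: Y).
  by case: hM => _ _ h; apply: h => //; lia.
move: xBY; rewrite inE => /andP[xY xB].
have cx : #|x |: Y| = #|Y|.+1 by rewrite cardsU1 xY.
have [Y' [h1 h2 h3 h4]] := IH (x |: Y) (ltac:(lia)) hx hB.
exists Y'; split => //.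
  by apply: subset_trans h1; exact: subsetUr.
apply: (subset_trans h2); apply/subsetP => z; rewrite !inE.
by case/orP => [/orP[/eqP -> | ->] | ->]; rewrite ?xB ?orbT.
Qed.

Lemma rk_submod (V : finType) (M : pred {set V}) (A B : {set V}) : is_matroid M ->
  rk M (A :|: B) + rk M (A :&: B) <= rk M A + rk M B.
Proof.
move=> hM.
have h0 : M set0 by case: hM.
have [I [hI1 hI2 hI3]] := rk_ex (A :&: B) h0.
have [K [hK1 hK2 hK3]] := rk_ex (A :|: B) h0.
have [J [hJ1 hJ2 hJ3 hJ4]] := mat_aug hM hI2 hK2.
have JAB : J \subset A :|: B.
  apply: (subset_trans hJ2); apply/subsetP => z; rewrite inE => /orP[/(subsetP hI1)|/(subsetP hK1)] //.
  by rewrite !inE => /andP[->].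
have e1 : #|J :&: A| <= rk M A.
  by apply: rk_ub; [exact: subsetIr | apply: mat_sub hM _ hJ3; exact: subsetIl].
have e2 : #|J :&: B| <= rk M B.
  by apply: rk_ub; [exact: subsetIr | apply: mat_sub hM _ hJ3; exact: subsetIl].
have e3 := cardsUI (J :&: A) (J :&: B).
have e4 : (J :&: A) :|: (J :&: B) = J.
  by rewrite -setIUr; apply/setIidPl.
have e5 : #|I| <= #|(J :&: A) :&: (J :&: B)|.
  apply: subset_leq_card; apply/subsetP => z zI.
  move: (subsetP hJ1 z zI) (subsetP hI1 z zI); rewrite !inE => -> /andP[-> ->] //.
rewrite e4 in e3; lia.
Qed.

Definition incl (V : finType) (M : pred {set V}) (x : V) (T : {set V}) := rk M (x |: T) <= rk M T.

Lemma incl_mono (V : finType) (M : pred {set V}) (x : V) (T T' : {set V}) : is_matroid M ->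
  incl M x T -> T \subset T' -> incl M x T'.
Proof.
rewrite /incl => hM h hT.
have := rk_submod (x |: T) T' hM.
have -> : (x |: T) :|: T' = x |: T'.
  by rewrite -setUA (setUidPr hT).
have : rk M T <= rk M ((x |: T) :&: T').
  apply: rk_mono; apply/subsetP => z zT; rewrite !inE zT orbT /=; exact: (subsetP hT).
lia.
Qed.

Lemma incl_mem (V : finType) (M : pred {set V}) (x : V) (T : {set V}) : x \in T -> incl M x T.
Proof. by move=> h; rewrite /incl (setUidPr _) // sub1set. Qed.

Lemma cl_set (V : finType) (M : pred {set V}) (T X : {set V}) : is_matroid M ->
  (forall x, x \in X -> incl M x T) -> rk M (T :|: X) <= rk M T.
Proof.
move=> hM hX.
suff : forall l : seq V, (forall x, x \in l -> incl M x T) -> rk M (T :|: [set x in l]) <= rk M T.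
  by move/(_ (enum X)); rewrite set_enum; apply => x; rewrite mem_enum; exact: hX.
elim=> [|x l IH] hl.
  have -> : [set x in [::]] = set0 :> {set V} by apply/setP => z; rewrite !inE.
  by rewrite setU0.
have -> : T :|: [set x0 in x :: l] = x |: (T :|: [set x0 in l]).
  by apply/setP => z; rewrite !inE; case: (z == x); case: (z \in T); case: (z \in l).
have hx : incl M x (T :|: [set x0 in l]).
  by apply: (incl_mono hM (hl x (mem_head _ _))); exact: subsetUl.
apply: leq_trans hx _; apply: IH => z zl; apply: hl; by rewrite inE zl orbT.
Qed.

Lemma cl_trans (V : finType) (M : pred {set V}) (x : V) (T T' : {set V}) : is_matroid M ->
  (forall t, t \in T -> incl M t T') -> incl M x T -> incl M x T'.
Proof.
move=> hM hT hx; rewrite /incl.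
have h1 : incl M x (T' :|: T) by apply: (incl_mono hM hx); exact: subsetUr.
have h2 := cl_set hM hT.
have h3 : rk M (x |: T') <= rk M (x |: (T' :|: T)).
  apply: rk_mono; apply/subsetP => z; rewrite !inE => /orP[->|->] //; by rewrite orbT.
rewrite /incl in h1; lia.
Qed.

Lemma dep_incl (V : finType) (M : pred {set V}) (x : V) (Y T : {set V}) : is_matroid M ->
  Y \subset T -> M Y -> ~~ M (x |: Y) -> incl M x T.
Proof.
move=> hM hYT hY hxY; apply: (incl_mono hM _ hYT); rewrite /incl.
apply: (@leq_trans #|Y|); last by apply: rk_ub.
apply/bigmax_leqP => Z; rewrite inE => /andP[hZ1 hZ2].
have [Y' [h1 h2 h3 h4]] := mat_aug hM hY hZ2.
have xY' : x \notin Y'.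
  apply/negP => xY'; move/negP: hxY; apply; apply: mat_sub hM _ h3.
  by apply/subsetP => z; rewrite !inE => /orP[/eqP->|/(subsetP h1)].
apply: (leq_trans h4); apply: subset_leq_card; apply/subsetP => z zY'.
move: (subsetP h2 z zY'); rewrite inE => /orP[//|/(subsetP hZ1)].
rewrite !inE => /orP[/eqP ezx|//]; by move: xY'; rewrite -ezx zY'.
Qed.


Local Open Scope ring_scope.

Lemma circ_thr (R : realFieldType) (V : finType) (M : pred {set V}) (w : V -> R)
    (X : {set V}) x u th : is_matroid M -> M X -> x \notin X -> ~~ M (x |: X) -> u \in X ->
  (forall u', u' \in X -> M ((x |: X) :\ u') -> w u <= w u') -> th <= w u ->
  ~~ M (x |: [set y in X | th <= w y]).
Proof.
move=> hM hX xX hxX uX hmin hth; apply/negP => hxt.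
have [Y' [h1 h2 h3 h4]] := mat_aug hM hxt hX.
have sY : Y' \subset x |: X.
  apply: (subset_trans h2); apply/subsetP => z; rewrite !inE.
  by case/orP => [/orP[->|/andP[-> _]]|->]; rewrite ?orbT.
have [u' u'X u'Y] : exists2 u', u' \in x |: X & u' \notin Y'.
  case: (boolP (x |: X \subset Y')) => hs.
    have exY : x |: X = Y' by apply/eqP; rewrite eqEsubset sY hs.
    by move: hxX; rewrite exY h3.
  by move/subsetPn: hs => [u' h1' h2']; exists u'.
have u'x : u' != x.
  by apply: contraNneq u'Y => ->; apply: (subsetP h1); rewrite !inE eqxx.
have u'X2 : u' \in X by move: u'X; rewrite !inE (negbTE u'x).
have eY : Y' = (x |: X) :\ u'.
  apply/eqP; rewrite eqEcard; apply/andP; split.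
    by apply/subsetP => z zY; rewrite in_setD1 (subsetP sY z zY) andbT; apply: contraNneq u'Y => <-.
  have := cardsD1 u' (x |: X); rewrite u'X cardsU1 xX /= => e.
  lia.
have := hmin u' u'X2; rewrite -eY => /(_ h3) hle.
have : u' \notin [set y in X | th <= w y].
  by apply: contra u'Y => hu; apply: (subsetP h1); rewrite in_setU1 hu orbT.
rewrite inE u'X2 /= -ltNge => hlt.
have := le_trans hth hle; rewrite leNgt hlt //.
Qed.

End Helpers2.
Import Helpers2.

Module Helpers3.
Local Open Scope ring_scope.
Section W.
Variables (R : realFieldType) (V : finType).
Implicit Types (w : V -> R) (A B : {set V}).

Lemma wsum_eq w1 w2 A : (forall y, y \in A -> w1 y = w2 y) -> wsum w1 A = wsum w2 A.
Proof. by move=> h; apply: eq_bigr. Qed.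

Lemma wsum_split w A B : B \subset A -> wsum w A = wsum w B + wsum w (A :\: B).
Proof.
move=> h; rewrite /wsum (@big_setID _ _ _ _ A B); congr (_ + _).
by rewrite (setIidPr h).
Qed.

Lemma wsum_U1 w x A : x \notin A -> wsum w (x |: A) = w x + wsum w A.
Proof. by move=> h; rewrite /wsum big_setU1. Qed.

Lemma wsum_D1 w x A : x \in A -> wsum w A = w x + wsum w (A :\ x).
Proof. by move=> h; rewrite /wsum (big_setD1 _ h). Qed.

Lemma wsum_ge0 w A : (forall y, y \in A -> 0 <= w y) -> 0 <= wsum w A.
Proof. exact: sum_ge0_set. Qed.

Lemma wsum_mem_le w x A : x \in A -> (forall y, y \in A -> 0 <= w y) -> w x <= wsum w A.
Proof.
move=> xA h; rewrite (wsum_D1 w xA) lerDl; apply: wsum_ge0 => y.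
rewrite inE => /andP[_]; exact: h.
Qed.

Lemma wsum_mono w A B : A \subset B -> (forall y, y \in B -> 0 <= w y) -> wsum w A <= wsum w B.
Proof.
move=> h hp; rewrite (wsum_split w h) lerDl; apply: wsum_ge0 => y.
rewrite inE => /andP[_]; exact: hp.
Qed.
End W.

Section Inv.
Variables (R : realFieldType) (V : finType) (f : {set V} -> R) (p : nat)
  (Ms : 'I_p -> pred {set V}) (alpha : R).
Hypothesis hM : forall j, is_matroid (Ms j).
Hypothesis hmono : monotone f.
Hypothesis hsub : submodular f.
Hypothesis halpha : 0 < alpha.

Definition Tset (X G : {set V}) (w : V -> R) (th : R) := [set y in X :|: G | th <= w y].

Record Inv (X : {set V}) (w : V -> R) (A Rej : {set V}) (G : 'I_p -> {set V})
    (cov : 'I_p -> V -> R) : Prop := InvI {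
  i_feas : feasible Ms X;
  i_XA : X \subset A;
  i_dis : forall x, x \in A -> x \notin Rej;
  i_f : f A <= wsum w A;
  i_rem : alpha * wsum w (A :\: X) <= wsum w X;
  i_wpos : forall x, x \in A -> 0 <= w x;
  i_G : forall j, G j \subset A :\: X;
  i_Gsum : \sum_(j : 'I_p) wsum w (G j) <= (p%:R - 1) * wsum w (A :\: X);
  i_rej : forall o, o \in Rej -> mg f o A <= (1 + alpha) * \sum_(j : 'I_p) cov j o;
  i_cpos : forall j o, o \in Rej -> 0 <= cov j o;
  i_cl : forall j th x, 0 < th ->
     ((x \in A) && (th <= w x)) || ((x \in Rej) && (th <= cov j x)) ->
     incl (Ms j) x (Tset X (G j) w th)
}.

Lemma ha1 : 0 < 1 + alpha.
Proof. have := halpha; lra. Qed.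

Lemma mg_ge0 x B : 0 <= mg f x B.
Proof. rewrite /mg subr_ge0; apply: hmono; exact: subsetUr. Qed.

Lemma inv_init : f set0 = 0 -> Inv set0 (fun _ => 0) set0 set0 (fun _ => set0) (fun _ _ => 0).
Proof.
move=> hf0; split.
- by move=> j; case: (hM j).
- exact: sub0set.
- by move=> x; rewrite inE.
- by rewrite hf0 /wsum big_set0.
- by rewrite set0D /wsum !big_set0 mulr0.
- by move=> x; rewrite inE.
- by move=> j; rewrite sub0set.
- rewrite set0D /wsum big1 ?big_set0 ?mulr0 // => j _; exact: big_set0.
- by move=> o; rewrite inE.
- by move=> j o; rewrite inE.
- by move=> j th x th0; rewrite !inE.
Qed.

Lemma inv_XGA X w A Rej G cov j y : Inv X w A Rej G cov -> y \in X :|: G j -> y \in A.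
Proof.
case=> _ hXA _ _ _ _ hG _ _ _ _; rewrite inE => /orP[/(subsetP hXA)//|/(subsetP (hG j))].
by rewrite inE => /andP[].
Qed.

Lemma inv_w X w w2 A Rej G cov : Inv X w A Rej G cov ->
  (forall y, y \in A -> w2 y = w y) -> Inv X w2 A Rej G cov.
Proof.
move=> hI hw; have hI' := hI; case: hI' => h1 h2 h3 h4 h5 h6 h7 h8 h9 h10 h11.
have hXA : forall y, y \in X -> y \in A by move=> y /(subsetP h2).
have hDA : forall y, y \in A :\: X -> y \in A by move=> y; rewrite inE => /andP[].
have hT : forall j th, Tset X (G j) w2 th = Tset X (G j) w th.
  move=> j th; apply/setP => y; rewrite /Tset !inE.
  case: (boolP ((y \in X) || (y \in G j))) => hy //=.
  by rewrite hw //; apply: (inv_XGA (j := j) hI); rewrite inE.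
split => //.
- by rewrite (wsum_eq (w2 := w)).
- by rewrite (wsum_eq (w1 := w2) (w2 := w) (A := A :\: X)) ?(wsum_eq (w1 := w2) (w2 := w) (A := X)) // => y hy; apply: hw; [apply: hXA | apply: hDA].
- by move=> x xA; rewrite hw //; exact: h6.
- rewrite (wsum_eq (w1 := w2) (w2 := w) (A := A :\: X)); last by move=> y hy; apply: hw; exact: hDA.
  apply: le_trans _ h8; apply: ler_sum => j _.
  rewrite (wsum_eq (w1 := w2) (w2 := w)) // => y hy; apply: hw; apply: hDA; exact: (subsetP (h7 j)).
- move=> j th x th0; rewrite hT; case/orP => [/andP[xA hx]|hx]; apply: h11 => //.
    by rewrite xA -(hw x xA) hx.
  by rewrite hx orbT.
Qed.

Lemma inv_rej X w A Rej G cov o (u : 'I_p -> V) (w0 : V -> R) :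
  Inv X w A Rej G cov -> o \notin A -> o \notin Rej ->
  (forall y, y \in X -> w0 y = w y) ->
  (forall j, ~~ Ms j (o |: X) -> [/\ u j \in X, Ms j ((o |: X) :\ u j) &
       forall u', u' \in X -> Ms j ((o |: X) :\ u') -> w0 (u j) <= w0 u']) ->
  mg f o X < (1 + alpha) * wsum w0 (u @: [set j | ~~ Ms j (o |: X)]) ->
  Inv X w A (o |: Rej) G
    (fun j y => if y == o then (if ~~ Ms j (o |: X) then w (u j) else 0) else cov j y).
Proof.
move=> hI oA oRej hw0 hu hlt; have hI' := hI; case: hI' => h1 h2 h3 h4 h5 h6 h7 h8 h9 h10 h11.
have oX : o \notin X by apply: contra oA => /(subsetP h2).
split => //.
- by move=> x xA; rewrite in_setU1 negb_or h3 // andbT; apply: (contraNneq _ oA) => <-.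
- move=> o'; rewrite in_setU1 => /orP[/eqP ->|ho'].
    rewrite eqxx.
    apply: le_trans (_ : mg f o X <= _).
      by apply: hsub.
    apply: ltW; apply: (lt_le_trans hlt); rewrite ler_pM2l; last exact: ha1.
    apply: (@le_trans _ _ (\sum_(j in [set j | ~~ Ms j (o |: X)]) w0 (u j))).
      apply: sum_imset_le => j; rewrite inE => /hu[uX _ _]; rewrite hw0 //; apply: h6; exact: (subsetP h2).
    rewrite big_mkcond /=; apply: ler_sum => j _.
    rewrite inE; case: ifP => // hv; have [uX _ _] := hu j hv; by rewrite hw0.
  have oo : (o' == o) = false by apply/negbTE; apply: (contraNneq _ oRej) => <-.
  rewrite oo; exact: h9.
- move=> j o'; rewrite in_setU1; case: eqP => [-> _|_ /= ho']; last exact: h10.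
  case: ifP => // /hu[uX _ _]; apply: h6; exact: (subsetP h2).
- move=> j th x th0; case: (eqVneq x o) => [->|xo].
    rewrite (negbTE oA) /= in_setU1 eqxx /=; case: ifP => [hv|_]; last by rewrite leNgt th0.
    move=> hth; have [uX huM hmin] := hu j hv.
    apply: (dep_incl (Y := [set y in X | th <= w y]) (hM j)).
    + apply/subsetP => y; rewrite !inE => /andP[-> ->] //.
    + apply: mat_sub (hM j) _ (h1 j); by apply/subsetP => y; rewrite inE => /andP[].
    apply: (circ_thr (hM j) (h1 j) oX hv uX) => // u' u'X hu'.
    by rewrite -!hw0 //; apply: hmin.
  rewrite in_setU1 (negbTE xo) /= => hx; apply: h11 => //.
Qed.

Lemma inv_acc X w A Rej G cov v (u : 'I_p -> V) (w0 : V -> R) :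
  Inv X w A Rej G cov -> v \notin A -> v \notin Rej ->
  (forall y, y \in X -> w0 y = w y) ->
  (forall j, ~~ Ms j (v |: X) -> [/\ u j \in X, Ms j ((v |: X) :\ u j) &
       forall u', u' \in X -> Ms j ((v |: X) :\ u') -> w0 (u j) <= w0 u']) ->
  (1 + alpha) * wsum w0 (u @: [set j | ~~ Ms j (v |: X)]) <= mg f v X ->
  Inv ((v |: X) :\: (u @: [set j | ~~ Ms j (v |: X)])) (upd w v (mg f v X)) (v |: A) Rej
    (fun j => if ~~ Ms j (v |: X) then G j :|: ((u @: [set j | ~~ Ms j (v |: X)]) :\ u j)
              else G j :|: (u @: [set j | ~~ Ms j (v |: X)])) cov.
Proof.
move=> hI vA vRej hw0 hu hle; have hI' := hI; case: hI' => h1 h2 h3 h4 h5 h6 h7 h8 h9 h10 h11.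
set viol := [set j | ~~ Ms j (v |: X)].
set S := u @: viol.
set m := mg f v X.
set w' := upd w v m.
have vX : v \notin X by apply: contra vA => /(subsetP h2).
have SX : S \subset X.
  by apply/subsetP => y /imsetP[j]; rewrite inE => /hu[uX _ _] ->.
have vS : v \notin S by apply: contra vX => /(subsetP SX).
have hw'A : forall y, y \in A -> w' y = w y.
  by move=> y yA; rewrite /w' /upd; case: eqP => // eyv; move: vA; rewrite -eyv yA.
have hw'v : w' v = m by rewrite /w' /upd eqxx.
have m0 : 0 <= m by apply: mg_ge0.
have XA : forall y, y \in X -> y \in A by move=> y /(subsetP h2).
have SA : forall y, y \in S -> y \in A by move=> y /(subsetP SX) /XA.
have wS : wsum w0 S = wsum w S by apply: wsum_eq => y /(subsetP SX) /hw0.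
have hSle : (1 + alpha) * wsum w S <= m by rewrite -wS.
have wSpos : forall y, y \in S -> 0 <= w y by move=> y /SA /h6.
have wS0 : 0 <= wsum w S by apply: wsum_ge0.
have uS : forall j, j \in viol -> u j \in S by move=> j jv; apply/imsetP; exists j.
have eAX : (v |: A) :\: ((v |: X) :\: S) = (A :\: X) :|: S.
  apply/setP => y; rewrite !inE.
  case: (eqVneq y v) => [->|yv] /=; first by rewrite (negbTE vS) (negbTE vA) (negbTE vX).
  case: (boolP (y \in S)) => yS /=; first by rewrite orbT (SA _ yS).
  by rewrite orbF andbC.
have wAXS : wsum w ((A :\: X) :|: S) = wsum w (A :\: X) + wsum w S.
  rewrite (wsum_split w (subsetUr (A :\: X) S)) addrC; congr (_ + _); congr wsum.
  apply/setP => y; rewrite !inE; case: (boolP (y \in S)) => yS /=; last by rewrite orbF.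
  by rewrite (subsetP SX _ yS).
have eX' : wsum w' ((v |: X) :\: S) = m + wsum w X - wsum w S.
  have -> : (v |: X) :\: S = v |: (X :\: S).
    apply/setP => y; rewrite !inE; case: (eqVneq y v) => [->|//] /=; by rewrite (negbTE vS).
  rewrite wsum_U1; last by rewrite inE (negbTE vX) andbF.
  rewrite hw'v (wsum_split w SX) (wsum_eq (w1 := w') (w2 := w)); first by ring.
  by move=> y; rewrite inE => /andP[_ /XA /hw'A].
have hAXSA : forall y, y \in (A :\: X) :|: S -> y \in A.
  by move=> y; rewrite inE => /orP[|/SA //]; rewrite inE => /andP[].
have h3' : forall o, o \in Rej -> o \notin A.
  by move=> o oR; apply/negP => /h3; rewrite oR.
have hG'S : forall j, (if ~~ Ms j (v |: X) then G j :|: (S :\ u j) else G j :|: S) \subset (A :\: X) :|: S.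
  move=> j; apply/subsetP => y; case: ifP => _; rewrite [y \in _ :|: _]inE [y \in (A :\: X) :|: S]inE.
  - case/orP => [/(subsetP (h7 j)) -> //| ]; rewrite inE => /andP[_ ->]; by rewrite orbT.
  - by case/orP => [/(subsetP (h7 j)) -> //| ->]; rewrite orbT.
split.
- move=> j; case: (boolP (Ms j (v |: X))) => hv.
    apply: mat_sub (hM j) _ hv; exact: subsetDl.
  have [uX huM _] := hu j hv.
  apply: mat_sub (hM j) _ huM; apply/subsetP => y; rewrite !inE => /andP[yS ->].
  rewrite andbT; apply: contraNneq yS => ->; apply: uS; by rewrite inE.
- apply/subsetP => y; rewrite !inE => /andP[_ /orP[->|/XA ->]]; by rewrite ?orbT.
- by move=> x; rewrite in_setU1 => /orP[/eqP ->|/h3].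
- rewrite wsum_U1 // hw'v (wsum_eq (w1 := w') (w2 := w)) //.
  have -> : f (v |: A) = f A + mg f v A by rewrite /mg; ring.
  have := hsub h2 vA; rewrite -/m; lra.
- rewrite eAX (wsum_eq (w1 := w') (w2 := w)); last by move=> y /hAXSA /hw'A.
  rewrite wAXS eX'; have := h5; have := hSle; have := halpha; lra.
- move=> x; rewrite in_setU1 => /orP[/eqP ->|xA]; first by rewrite hw'v.
  by rewrite hw'A //; exact: h6.
- move=> j /=; rewrite eAX; exact: hG'S.
- rewrite eAX (wsum_eq (w1 := w') (w2 := w) (A := (A :\: X) :|: S)); last by move=> y /hAXSA /hw'A.
  rewrite wAXS.
  have e1 : forall j : 'I_p, wsum w' (if ~~ Ms j (v |: X) then G j :|: (S :\ u j) else G j :|: S)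
       <= wsum w (G j) + (wsum w S - (if j \in viol then w (u j) else 0)).
    move=> j; rewrite (wsum_eq (w1 := w') (w2 := w)); last by move=> y /(subsetP (hG'S j)) /hAXSA /hw'A.
    rewrite inE; case: ifP => hv.
      apply: (@le_trans _ _ (wsum w (G j) + wsum w (S :\ u j))).
        by apply: sum_setU_le => y; rewrite inE => /andP[_ /wSpos].
      rewrite (wsum_D1 w (uS j _)); last by rewrite inE hv.
      have -> : w (u j) + wsum w (S :\ u j) - w (u j) = wsum w (S :\ u j) by ring.
      by [].
    by rewrite subr0; apply: sum_setU_le.
  have e2 : wsum w S <= \sum_(j : 'I_p) (if j \in viol then w (u j) else 0).
    rewrite -big_mkcond /=; apply: sum_imset_le => j /uS; exact: wSpos.
  have e3 : \sum_(j : 'I_p) wsum w S = p%:R * wsum w S by rewrite sumr_const card_ord mulr_natl.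
  have e4 := @ler_sum _ _ (index_enum (ordinal p)) predT _ _ (fun j _ => e1 j).
  rewrite big_split /= sumrB e3 in e4.
  have := h8; move: e2 e4.
  set a := \sum_(j : 'I_p) _. set b := \sum_(j : 'I_p) _. set c := \sum_(j : 'I_p) _.
  move=> *; lra.
- move=> o oRej; apply: (le_trans _ (h9 _ oRej)).
  apply: hsub; first exact: subsetUr.
  by rewrite in_setU1 negb_or (h3' o oRej) andbT; apply: (contraNneq _ vRej) => <-.
- exact: h10.
move=> j th x th0 /=.
set X' := (v |: X) :\: S.
set G' := (if ~~ Ms j (v |: X) then G j :|: (S :\ u j) else G j :|: S).
set T' := Tset X' G' w' th.
have vX' : v \in X' by rewrite !inE eqxx (negbTE vS).
have key : forall t, t \in Tset X (G j) w th -> incl (Ms j) t T'.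
  move=> t; rewrite inE => /andP[tXG tth].
  have tA : t \in A by apply: (inv_XGA hI tXG).
  have tv : t != v by apply: contraNneq vA => <-.
  case: (boolP ((j \in viol) && (t == u j))) => [/andP[jv /eqP etu]|hnot].
    move: jv; rewrite inE => hv.
    have [uX huM hmin] := hu j hv.
    set Xu := [set y in X | w (u j) <= w y].
    have hmin' : forall u', u' \in X -> Ms j ((v |: X) :\ u') -> w (u j) <= w u'.
      by move=> u' u'X hu'; rewrite -!hw0 //; apply: hmin.
    have hdep := circ_thr (hM j) (h1 j) vX hv uX hmin' (lexx _).
    rewrite etu.
    apply: (dep_incl (Y := (v |: Xu) :\ u j) (hM j)).
    + apply/subsetP => y; rewrite !inE => /andP[yu /orP[/eqP ->|/andP[yX hy]]].
        rewrite (negbTE vS) eqxx /= hw'v; apply: (le_trans tth); rewrite etu.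
        have hu1 : w (u j) <= wsum w S by apply: wsum_mem_le => //; apply: uS; rewrite inE.
        have := mulr_ge0 (ltW halpha) wS0; have := hSle; move: hu1; lra.
      rewrite hw'A ?XA //; rewrite etu in tth; rewrite (le_trans tth hy) andbT.
      case: (boolP (y \in S)) => yS.
        by rewrite /G' hv !inE yS yu !orbT.
      by rewrite yX orbT.
    + apply: mat_sub (hM j) _ huM; apply/subsetP => y; rewrite !inE => /andP[-> /orP[->|/andP[->]]] //.
      by rewrite orbT.
    + have -> : u j |: ((v |: Xu) :\ u j) = v |: Xu.
        apply/setP => y; rewrite !inE; case: (eqVneq y (u j)) => [->|] //=.
        by rewrite uX lexx orbT.
      exact: hdep.
  apply: incl_mem; rewrite inE hw'A // tth andbT.
  move: tXG; rewrite inE => /orP[tX|tG].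
    case: (boolP (t \in S)) => tS; last by rewrite /X' !inE tS tX orbT.
    rewrite /G'; case: ifP => hv; rewrite !inE tS ?andbT ?orbT //.
    by move: hnot; rewrite inE hv /= => ->; rewrite !orbT.
  by rewrite inE /G'; case: ifP => _; rewrite !inE tG ?orbT.
case: (eqVneq x v) => [->|xv].
  rewrite in_setU1 eqxx /= (negbTE vRej) /= orbF => hth.
  by apply: incl_mem; rewrite /T' /Tset in_set in_setU vX' hth.
rewrite in_setU1 (negbTE xv) /= => hx.
apply: (cl_trans (hM j) key); apply: h11 => //.
case/orP: hx => [/andP[xA hth]|->]; last by rewrite orbT.
by rewrite xA -(hw'A x xA) hth.
Qed.

Lemma subadd (A : {set V}) (l : seq V) : uniq l -> (forall z, z \in l -> z \notin A) ->
  f (A :|: [set z in l]) <= f A + \sum_(z <- l) mg f z A.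
Proof.
elim: l => [|x l IH] /=.
  by move=> _ _; rewrite big_nil addr0 (_ : [set z in [::]] = set0) ?setU0 //; apply/setP => z; rewrite !inE.
move=> /andP[xl ul] hz.
have -> : A :|: [set z in x :: l] = x |: (A :|: [set z in l]).
  by apply/setP => z; rewrite !inE; case: (z == x); case: (z \in A); case: (z \in l).
have e : f (x |: (A :|: [set z in l])) = f (A :|: [set z in l]) + mg f x (A :|: [set z in l]) by rewrite /mg; ring.
rewrite e big_cons.
have h1 := IH ul (fun z zl => hz z (ltac:(by rewrite inE zl orbT))).
have h2 : mg f x (A :|: [set z in l]) <= mg f x A.
  apply: hsub; first exact: subsetUl.
  rewrite inE negb_or hz ?mem_head //= inE; exact: xl.
lra.
Qed.

Lemma inv_final X w A Rej G cov (O : {set V}) : Inv X w A Rej G cov -> (0 < p)%N ->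
  O \subset A :|: Rej -> feasible Ms O ->
  f O <= ((p%:R * (alpha + 1) - 1) * (alpha + 1) / alpha + 1 + 1 / alpha) * wsum w X.
Proof.
move=> hI hp hO hOf; have hI' := hI; case: hI' => h1 h2 h3 h4 h5 h6 h7 h8 h9 h10 h11.
set P := O :\: A.
have PR : forall o : V, o \in P -> o \in Rej.
  move=> o; rewrite inE => /andP[oA /(subsetP hO)]; rewrite inE (negbTE oA) //.
have hfO : f O <= f (A :|: P).
  apply: hmono; apply/subsetP => o oO; rewrite !inE oO andbT; by case: (o \in A).
have hP : f (A :|: P) <= f A + \sum_(o in P) mg f o A.
  have := @subadd A (enum P) (enum_uniq _).
  rewrite set_enum big_enum; apply => z; rewrite mem_enum inE => /andP[] //.
have hR : \sum_(o in P) mg f o A <= (1 + alpha) * \sum_(j : 'I_p) \sum_(o in P) cov j o.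
  rewrite (exchange_big _ _ (index_enum _)) /= mulr_sumr; apply: ler_sum => o oP.
  exact: h9 (PR _ oP).
have hC : forall j : 'I_p, \sum_(o in P) cov j o <= wsum w X + wsum w (G j).
  move=> j.
  have hb : forall y, y \in X :|: G j -> 0 <= w y by move=> y /(inv_XGA hI) /h6.
  apply: (@le_trans _ _ (\sum_(y in X :|: G j) w y)); last first.
    by apply: sum_setU_le => y hy; apply: hb; rewrite inE hy orbT.
  apply: (@count_sum _ _ #|P|) => //.
    by move=> o /PR; apply: h10.
  move=> t t0.
  set Pt := [set x in P | (t <= cov j x)%R].
  have hPt : Ms j Pt.
    apply: mat_sub (hM j) _ (hOf j); apply/subsetP => x; rewrite !inE => /andP[/andP[_ ->]] //.
  have e1 := @rk_ub _ (Ms j) (Tset X (G j) w t :|: Pt) Pt (subsetUr _ _) hPt.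
  have e2 : (rk (Ms j) (Tset X (G j) w t :|: Pt) <= rk (Ms j) (Tset X (G j) w t))%N.
    apply: cl_set (hM j) _ => x; rewrite inE => /andP[xP hx].
    by apply: h11 => //; rewrite (PR _ xP) hx orbT.
  have e3 := rk_card (Ms j) (Tset X (G j) w t).
  exact: leq_trans e1 (leq_trans e2 e3).
have hS : \sum_(j : 'I_p) \sum_(o in P) cov j o <= p%:R * wsum w X + \sum_(j : 'I_p) wsum w (G j).
  apply: le_trans (ler_sum _ (fun j _ => hC j)) _.
  by rewrite big_split /= sumr_const card_ord mulr_natl.
have hfA : f A <= wsum w X + wsum w (A :\: X) by rewrite -wsum_split.
set W := wsum w X. set Rr := wsum w (A :\: X).
set Gs := \sum_(j : 'I_p) wsum w (G j).
have W0 : 0 <= W by apply: wsum_ge0 => y /(subsetP h2) /h6.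
have R0 : 0 <= Rr by apply: wsum_ge0 => y; rewrite inE => /andP[_ /h6].
have p1 : 1 <= (p%:R : R) by rewrite ler1n.
have hfin : f O <= W + Rr + (1 + alpha) * (p%:R * W + (p%:R - 1) * Rr).
  have := ler_pM2l ha1; move=> hh.
  have : (1 + alpha) * \sum_(j : 'I_p) \sum_(o in P) cov j o <= (1 + alpha) * (p%:R * W + (p%:R - 1) * Rr).
    rewrite ler_pM2l; last exact: ha1.
    apply: le_trans hS _; rewrite lerD2l; exact: h8.
  move: hfO hP hR hfA.
  set s1 := \sum_(o in P) mg f o A. set s2 := \sum_(j : 'I_p) \sum_(o in P) cov j o.
  set q := (1 + alpha) * (p%:R * W + (p%:R - 1) * Rr).
  rewrite -/W -/Rr; lra.
apply: le_trans hfin _.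
have ea : ((p%:R * (alpha + 1) - 1) * (alpha + 1) / alpha + 1 + 1 / alpha) * W
   = (p%:R * (alpha + 1) ^+ 2 * W) / alpha.
  by field; rewrite gt_eqF.
rewrite ea ler_pdivlMr //.
have hq : 0 <= (p%:R * (1 + alpha) - alpha) * (W - alpha * Rr).
  apply: mulr_ge0; first by have := halpha; move: p1; nra.
  by move: h5; rewrite -/W -/Rr; lra.
move: hq; nra.
Qed.

Variables (Ex : {set V} -> V -> (V -> R) -> {set V}) (d : nat) (eps : R).
Hypothesis hEx : exch_spec Ms Ex.

Definition InvS X w A Rej := exists G cov, Inv X w A Rej G cov.

Lemma rej_one X w A Rej o (w0 : V -> R) : InvS X w A Rej -> o \notin A -> o \notin Rej ->
  (forall y, y \in X -> w0 y = w y) ->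
  mg f o X < (1 + alpha) * wsum w0 (Ex X o w0) -> InvS X w A (o |: Rej).
Proof.
move=> [G [cov hI]] oA oR hw0 hlt.
have [u [hu eEx]] := hEx o w0 (i_feas hI).
rewrite eEx in hlt.
exists G; eexists; apply: (inv_rej hI oA oR hw0 _ hlt).
move=> j hj; have [a b c] := hu j hj; by split.
Qed.

Lemma acc_one X w A Rej v (w0 : V -> R) : InvS X w A Rej -> v \notin A -> v \notin Rej ->
  (forall y, y \in X -> w0 y = w y) ->
  (1 + alpha) * wsum w0 (Ex X v w0) <= mg f v X ->
  InvS ((v |: X) :\: Ex X v w0) (upd w v (mg f v X)) (v |: A) Rej.
Proof.
move=> [G [cov hI]] vA vR hw0 hle.
have [u [hu eEx]] := hEx v w0 (i_feas hI).
rewrite eEx in hle *.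
do 2 eexists; apply: (inv_acc hI vA vR hw0 _ hle).
move=> j hj; have [a b c] := hu j hj; by split.
Qed.

Lemma InvS_w X w w2 A Rej : InvS X w A Rej -> (forall y, y \in A -> w2 y = w y) -> InvS X w2 A Rej.
Proof. by move=> [G [cov hI]] h; exists G, cov; apply: inv_w hI h. Qed.

Lemma rej_list X w A Rej (l : seq V) : InvS X w A Rej -> uniq l ->
  (forall o, o \in l -> [/\ o \notin A, o \notin Rej & mg f o X < (1 + alpha) * wsum w (Ex X o w)]) ->
  InvS X w A (Rej :|: [set o in l]).
Proof.
elim: l Rej => [|o l IH] Rej hI /=.
  by move=> _ _; rewrite (_ : [set o in [::]] = set0) ?setU0 //; apply/setP => z; rewrite !inE.
move=> /andP[ol ul] hl.
have [oA oR hlt] := hl o (mem_head _ _).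
have hI1 := rej_one hI oA oR (fun _ _ => erefl) hlt.
have -> : Rej :|: [set o0 in o :: l] = (o |: Rej) :|: [set o0 in l].
  by apply/setP => z; rewrite !inE; case: (z == o); case: (z \in Rej); case: (z \in l).
apply: IH hI1 ul _ => z zl; have [zA zR zlt] := hl z (ltac:(by rewrite inE zl orbT)).
split => //; rewrite in_setU1 negb_or zR andbT.
by apply: contraNneq ol => <-.
Qed.

Lemma stepA_inv x (X C : {set V}) (w : V -> R) (X' C' : {set V}) (w' : V -> R) (A Rej : {set V}) :
  InvS X w A Rej -> (forall y, y \in C -> (y \notin A) && (y \notin Rej)) ->
  x \notin C -> x \notin A -> x \notin Rej ->
  stepA f Ex d eps alpha x (X, C, w) (X', C', w') ->
  exists A' Rej', [/\ InvS X' w' A' Rej',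
    (forall y, y \in C' -> (y \notin A') && (y \notin Rej')),
    (forall y, (y == x) || [|| y \in C, y \in A | y \in Rej] -> [|| y \in C', y \in A' | y \in Rej']) &
    (forall y, [|| y \in C', y \in A' | y \in Rej'] -> (y == x) || [|| y \in C, y \in A | y \in Rej])].
Proof.
move=> hI hC xC xA xR; rewrite /stepA.
set C2 := [set v in x |: C | (1 + alpha) * wsum w (Ex X v w) <= mg f v X].
set Z := (x |: C) :\: C2.
have hxC : forall y, y \in x |: C -> (y \notin A) && (y \notin Rej).
  by move=> y; rewrite in_setU1 => /orP[/eqP ->|/hC //]; rewrite xA xR.
have hI1 : InvS X w A (Rej :|: Z).
  rewrite -(set_enum Z); apply: rej_list hI (enum_uniq _) _ => o; rewrite mem_enum inE => /andP[oC2 oC].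
  have /andP[oA oR] := hxC o oC.
  split => //; move: oC2; rewrite inE oC /= -ltNge //.
have C2s : forall y, y \in C2 -> y \in x |: C by move=> y; rewrite inE => /andP[].
have C2f : forall y, y \in C2 -> (y \notin A) && (y \notin Rej :|: Z).
  move=> y yC2; have /andP[yA yR] := hxC y (C2s y yC2).
  by rewrite yA inE negb_or yR /= inE yC2.
have cov1 : forall y, (y == x) || [|| y \in C, y \in A | y \in Rej] ->
     [|| y \in C2, y \in A | y \in Rej :|: Z].
  move=> y hy; case: (boolP (y \in C2)) => //= yC2.
  case: (boolP (y \in x |: C)) => yxC.
    have yZ : y \in Z by rewrite /Z in_setD yC2 yxC.
    by rewrite in_setU yZ !orbT.
  move: hy yxC; rewrite in_setU1 in_setU; case: (y == x); case: (y \in C); case: (y \in A); case: (y \in Rej) => //=.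
have back1 : forall y, [|| y \in C2, y \in A | y \in Rej :|: Z] -> (y == x) || [|| y \in C, y \in A | y \in Rej].
  move=> y; case/or3P => [/C2s|->|]; rewrite ?orbT //.
    by rewrite in_setU1 => /orP[->|->]; rewrite ?orbT.
  rewrite in_setU => /orP[->|]; rewrite ?orbT //.
  by rewrite /Z in_setD in_setU1 => /andP[_ /orP[->|->]]; rewrite ?orbT.
case: ifP => _.
  by case=> -> -> ->; exists A, (Rej :|: Z); split.
case=> v vC2 [-> -> ->]; exists (v |: A), (Rej :|: Z).
have /andP[vA vR] := C2f v vC2.
split.
- apply: acc_one hI1 vA vR (fun _ _ => erefl) _.
  by move: vC2; rewrite inE => /andP[_].
- move=> y; rewrite in_setD1 => /andP[yv yC2]; have /andP[yA ->] := C2f y yC2.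
  by rewrite in_setU1 negb_or yv yA.
- move=> y /cov1 /or3P[yC2|yA|->]; rewrite ?orbT //.
    case: (eqVneq y v) => [->|yv]; first by rewrite in_setU1 eqxx orbT.
    by rewrite in_setD1 yv yC2.
  by rewrite in_setU1 yA !orbT.
- move=> y /or3P[|yA'|yR'].
  + by rewrite in_setD1 => /andP[_ yC2]; apply: back1; rewrite yC2.
  + move: yA'; rewrite in_setU1 => /orP[/eqP ->|yA]; first by apply: back1; rewrite vC2.
    by apply: back1; rewrite yA orbT.
  + by apply: back1; rewrite yR' !orbT.
Qed.

Lemma runA_inv (s : seq V) (X C : {set V}) (w : V -> R) (X' C' : {set V}) (w' : V -> R) (A Rej : {set V}) :
  runA f Ex d eps alpha s (X, C, w) (X', C', w') ->
  InvS X w A Rej -> (forall y, y \in C -> (y \notin A) && (y \notin Rej)) ->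
  uniq s -> (forall z, z \in s -> [&& z \notin C, z \notin A & z \notin Rej]) ->
  exists A' Rej', [/\ InvS X' w' A' Rej', (forall y, y \in C' -> (y \notin A') && (y \notin Rej')) &
     (forall y, (y \in s) || [|| y \in C, y \in A | y \in Rej] -> [|| y \in C', y \in A' | y \in Rej'])].
Proof.
elim: s X C w A Rej => [|x s IH] X C w A Rej /=.
  by case=> -> -> -> hI hC _ _; exists A, Rej; split.
case=> [[[X1 C1] w1] hstep hrun] hI hC /andP[xs us] hfr.
have /and3P[xC xA xR] := hfr x (mem_head _ _).
have [A1 [Rej1 [hI1 hC1 hcov hback]]] := stepA_inv hI hC xC xA xR hstep.
have hfr1 : forall z, z \in s -> [&& z \notin C1, z \notin A1 & z \notin Rej1].
  move=> z zs; have /and3P[zC zA zR] := hfr z (ltac:(by rewrite inE zs orbT)).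
  have zx : (z == x) = false by apply/negbTE; apply: contraNneq xs => <-.
  case: (boolP [|| z \in C1, z \in A1 | z \in Rej1]) => [/hback|].
    by rewrite zx (negbTE zC) (negbTE zA) (negbTE zR).
  by rewrite !negb_or.
have [A2 [Rej2 [hI2 hC2 hcov2]]] := IH X1 C1 w1 A1 Rej1 hrun hI1 hC1 us hfr1.
exists A2, Rej2; split => // y hy; apply: hcov2.
move: hy; rewrite inE -orbA => /orP[yx|/orP[->//|hy]].
  by rewrite hcov ?orbT // yx.
by rewrite hcov ?orbT // hy orbT.
Qed.

Lemma stepB_inv v (X : {set V}) (w : V -> R) (X' : {set V}) (w' : V -> R) (A Rej : {set V}) :
  InvS X w A Rej -> v \notin A -> v \notin Rej ->
  stepB f Ex alpha v (X, w) (X', w') ->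
  exists A' Rej', [/\ InvS X' w' A' Rej',
    (forall y, [|| y == v, y \in A | y \in Rej] -> (y \in A') || (y \in Rej')) &
    (forall y, (y \in A') || (y \in Rej') -> [|| y == v, y \in A | y \in Rej])].
Proof.
move=> hI vA vR; rewrite /stepB.
set wv := upd w v (mg f v X).
have hI0 := hI; case: hI0 => [G [cov hI']].
have vX : v \notin X by apply: contra vA => /(subsetP (i_XA hI')).
have hwX : forall y, y \in X -> wv y = w y.
  by move=> y yX; rewrite /wv /upd; case: eqP => // eyv; move: vX; rewrite -eyv yX.
have hwA : forall y, y \in A -> wv y = w y.
  by move=> y yA; rewrite /wv /upd; case: eqP => // eyv; move: vA; rewrite -eyv yA.
have wvv : wv v = mg f v X by rewrite /wv /upd eqxx.
case: ifP => hc.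
  case=> -> ->; exists (v |: A), Rej; split.
  - by apply: acc_one hI vA vR hwX _; rewrite -wvv.
  - by move=> y; rewrite in_setU1 -orbA.
  - by move=> y; rewrite in_setU1 -orbA.
case=> -> ->; exists A, (v |: Rej); split.
- apply: (InvS_w (w := w)) => //.
  apply: rej_one hI vA vR hwX _.
  by rewrite -wvv ltNge hc.
- by move=> y; rewrite in_setU1; case: (y == v); case: (y \in A); rewrite ?orbT.
- by move=> y; rewrite in_setU1; case: (y == v); case: (y \in A); rewrite ?orbT.
Qed.

Lemma runB_inv (s : seq V) (X : {set V}) (w : V -> R) (X' : {set V}) (w' : V -> R) (A Rej : {set V}) :
  runB f Ex alpha s (X, w) (X', w') -> InvS X w A Rej -> uniq s ->
  (forall z, z \in s -> (z \notin A) && (z \notin Rej)) ->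
  exists A' Rej', InvS X' w' A' Rej' /\
    (forall y, [|| y \in s, y \in A | y \in Rej] -> (y \in A') || (y \in Rej')).
Proof.
elim: s X w A Rej => [|x s IH] X w A Rej /=.
  by case=> -> -> hI _ _; exists A, Rej; split => // y.
case=> [[X1 w1] hstep hrun] hI /andP[xs us] hfr.
have /andP[xA xR] := hfr x (mem_head _ _).
have [A1 [Rej1 [hI1 hcov hback]]] := stepB_inv hI xA xR hstep.
have hfr1 : forall z, z \in s -> (z \notin A1) && (z \notin Rej1).
  move=> z zs; have /andP[zA zR] := hfr z (ltac:(by rewrite inE zs orbT)).
  have zx : (z == x) = false by apply/negbTE; apply: contraNneq xs => <-.
  case: (boolP ((z \in A1) || (z \in Rej1))) => [/hback|].
    by rewrite zx (negbTE zA) (negbTE zR).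
  by rewrite negb_or.
have [A2 [Rej2 [hI2 hcov2]]] := IH X1 w1 A1 Rej1 hrun hI1 us hfr1.
exists A2, Rej2; split => // y hy; apply: hcov2.
move: hy; rewrite inE -orbA => /orP[yx|/orP[->//|hy]].
  by rewrite hcov ?orbT // yx.
by rewrite hcov ?orbT // hy orbT.
Qed.

Lemma main_thm (D : {set V}) (s : seq V) (S1 C : {set V}) (wA : V -> R) (sB : seq V)
    (S2 : {set V}) (wB : V -> R) (O : {set V}) :
  (0 < p)%N -> f set0 = 0 -> uniq s -> (forall x, x \in s) ->
  runA f Ex d eps alpha s (set0, set0, fun _ => 0) (S1, C, wA) ->
  uniq sB -> (forall x, (x \in sB) = (x \in C :\: D)) ->
  runB f Ex alpha sB (S1, wA) (S2, wB) ->
  O \subset (~: C) :|: (C :\: D) -> feasible Ms O ->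
  f O <= ((p%:R * (alpha + 1) - 1) * (alpha + 1) / alpha + 1 + 1 / alpha) * wsum wB S2.
Proof.
move=> hp hf0 us alls hA usB hsB hB hO hOf.
have hI0 : InvS set0 (fun _ => 0) set0 set0.
  by exists (fun _ => set0), (fun _ _ => 0); apply: inv_init.
have e1 : forall y, y \in (set0 : {set V}) -> (y \notin (set0 : {set V})) && (y \notin (set0 : {set V})).
  by move=> y; rewrite inE.
have e2 : forall z, z \in s -> [&& z \notin (set0 : {set V}), z \notin (set0 : {set V}) & z \notin (set0 : {set V})].
  by move=> z _; rewrite !inE.
have [A1 [Rej1 [hI1 hC1 hcov1]]] := runA_inv hA hI0 e1 us e2.
have hfr : forall z, z \in sB -> (z \notin A1) && (z \notin Rej1).
  by move=> z; rewrite hsB inE => /andP[_ /hC1].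
have [A2 [Rej2 [[G [cov hI2]] hcov2]]] := runB_inv hB hI1 usB hfr.
apply: (inv_final hI2 hp _ hOf).
apply/subsetP => o /(subsetP hO); rewrite in_setU => /orP[oC|oCD].
  have := hcov1 o; rewrite alls /= => /(_ isT) /or3P[oC'|oA|oR].
  - by move: oC; rewrite inE oC'.
  - by rewrite in_setU hcov2 // oA orbT.
  - by rewrite in_setU hcov2 // oR !orbT.
have osB : o \in sB by rewrite hsB.
by rewrite in_setU hcov2 // osB.
Qed.
End Inv.

End Helpers3.
Import Helpers3.

Unset Implicit Arguments.
Local Open Scope ring_scope.

Theorem corollary1 (R : realFieldType) (V : finType) (f : {set V} -> R)
    (p : nat) (Ms : 'I_p -> pred {set V}) (d : nat) (D : {set V})
    (eps alpha : R) (Ex : {set V} -> V -> (V -> R) -> {set V})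
    (s : seq V) (S1 C : {set V}) (wA : V -> R)
    (sB : seq V) (S2 : {set V}) (wB : V -> R) (O : {set V}) :
  (0 < p)%N ->
  (forall j, is_matroid (Ms j)) ->
  f set0 = 0 -> (forall S : {set V}, 0 <= f S) -> monotone f -> submodular f ->
  (#|D| <= d)%N -> 0 < eps -> 0 < alpha ->
  exch_spec Ms Ex ->
  uniq s -> (forall x, x \in s) ->
  runA f Ex d eps alpha s (set0, set0, fun _ => 0) (S1, C, wA) ->
  uniq sB -> (forall x, (x \in sB) = (x \in C :\: D)) ->
  runB f Ex alpha sB (S1, wA) (S2, wB) ->
  O \subset (~: C) :|: (C :\: D) -> feasible Ms O ->
  (forall S : {set V}, S \subset (~: C) :|: (C :\: D) -> feasible Ms S -> f S <= f O) ->
  f O <= ((p%:R * (alpha + 1) - 1) * (alpha + 1) / alpha + 1 + 1 / alpha)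
           * wsum wB S2.
Proof.
move=> hp hM hf0 hpos hmono hsub hD heps halpha hEx us alls hA usB hsB hB hO hOf _.
exact: (main_thm hM hmono hsub halpha hEx hp hf0 us alls hA usB hsB hB hO hOf).
Qed.
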